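(* Let $\Gamma$ be a locally finite vertex-transitive weighted graph with distinguished vertex $e$. Let $x,y$ be vertices and suppose there exists a finitely supported non-zero function $f:\Gamma\to\mathbb{R}$ that is harmonic at every vertex other than $x$ and $y$. Then there exists $N>0$ such that the conditional probability $\mathbb{P}_g[\,T_x<T_y\mid\min\{T_x,T_y\}<\infty\,]$ is independent of $g$ for all vertices $g$ with $d(e,g)\ge N$.
   Context: Weighted graph: undirected, no loops or multiple edges, weights $\omega_{xy}=\omega_{yx}>0$, $\deg x=\sum_{y\sim x}\omega_{xy}$; vertex-transitive means the group of weight-preserving automorphisms acts transitively on vertices. $f$ is harmonic at $z$ if $f(z)=\frac{1}{\deg z}\sum_{w\sim z}\omega_{zw}f(w)$. $d$ is the graph metric. $(X_t)_{t\ge0}$ is the random walk stepping from $z$ to neighbour $w$ with probability $\omega_{zw}/\deg z$; $\mathbb{P}_g$ is its law started at $X_0=g$, and $T_z=\inf\{t\ge0:X_t=z\}$ (with $\inf\emptyset=\infty$). *)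

(* Defs.v *)
From mathcomp Require Import all_boot all_order all_algebra.
From mathcomp Require Import classical_sets reals.
Set Implicit Arguments. Unset Strict Implicit. Unset Printing Implicit Defensive.
Import Order.TTheory GRing.Theory Num.Theory.
Local Open Scope ring_scope.

Section WGraph.
Variables (R : realType) (V : eqType).

Definition is_lf_wgraph (w : V -> V -> R) (nb : V -> seq V) : Prop :=
  [/\ (forall x y, w x y = w y x),
      (forall x y, 0 <= w x y),
      (forall x y, (y \in nb x) = (0 < w x y)),
      (forall x, w x x = 0) &
      (forall x, uniq (nb x))].

Fixpoint walk (nb : V -> seq V) (n : nat) (a b : V) : Prop :=
  match n with
  | 0%N => a = b
  | n'.+1 => exists2 c, c \in nb a & walk nb n' c b
  end.

Definition connected_graph (nb : V -> seq V) : Prop :=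
  forall a b, exists n, walk nb n a b.

(* N <= d(a,b) for the graph metric d *)
Definition dist_ge (nb : V -> seq V) (N : nat) (a b : V) : Prop :=
  forall n, (n < N)%N -> ~ walk nb n a b.

Definition deg (w : V -> V -> R) (nb : V -> seq V) (x : V) : R :=
  \sum_(y <- nb x) w x y.

Definition harmonic_at (w : V -> V -> R) (nb : V -> seq V) (f : V -> R) (z : V) : Prop :=
  f z = (deg w nb z)^-1 * \sum_(u <- nb z) w z u * f u.

Definition weight_automorphism (w : V -> V -> R) (phi : V -> V) : Prop :=
  bijective phi /\ forall u v, w (phi u) (phi v) = w u v.

Definition vertex_transitive (w : V -> V -> R) : Prop :=
  forall a b, exists phi, weight_automorphism w phi /\ phi a = b.

(* hitp A B n g = P_g[ T_A <= n and T_A < T_B ] for the random walk stepping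
   from z to u with probability w z u / deg z. *)
Fixpoint hitp (w : V -> V -> R) (nb : V -> seq V) (A B : pred V) (n : nat) (g : V) : R :=
  if g \in B then 0 else if g \in A then 1 else
  match n with
  | 0%N => 0
  | n'.+1 => \sum_(u <- nb g) (w g u / deg w nb g) * hitp w nb A B n' u
  end.

(* P_g[ T_A < T_B ] (with T_A < oo), as the monotone limit over n *)
Definition hit_prob (w : V -> V -> R) (nb : V -> seq V) (A B : pred V) (g : V) : R :=
  sup (range (fun n => hitp w nb A B n g)).

(* P_g[ T_x < T_y | min(T_x,T_y) < oo ] *)
Definition cond_hit (w : V -> V -> R) (nb : V -> seq V) (x y g : V) : R :=
  hit_prob w nb (pred1 x) (pred1 y) g / hit_prob w nb (pred2 x y) pred0 g.

End WGraph.

(* Main.v *)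
Require Import Defs.
From mathcomp Require Import all_boot all_order all_algebra.
From mathcomp Require Import classical_sets reals.
From mathcomp Require Import ring lra.
Import Order.TTheory GRing.Theory Num.Theory.
Local Open Scope ring_scope.

Lemma sup_props (R : realType) (u : nat -> R) : (forall n, 0 <= u n <= 1) ->
  (forall n, u n <= sup (range u)) /\
  (forall eps, 0 < eps -> exists n, sup (range u) - eps < u n).
Proof.
move=> hu.
have hs : has_sup (range u).
  split; first by exists (u 0%N), 0%N.
  by exists 1 => _ [n _ <-]; case/andP: (hu n).
split.
  by move=> n; apply: sup_upper_bound => //; exists n.
by move=> eps he; case: (sup_adherent he hs) => _ [n _ <-] h; exists n.
Qed.

Section G.
Variables (R : realType) (V : eqType) (w : V -> V -> R) (nb : V -> seq V).
Hypothesis hg : is_lf_wgraph w nb.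

Lemma w_ge0 a b : 0 <= w a b. Proof. by case: hg. Qed.
Lemma deg_ge0 g : 0 <= deg w nb g.
Proof. by rewrite /deg sumr_ge0 // => u _; apply: w_ge0. Qed.
Definition p g u := w g u / deg w nb g.
Lemma p_ge0 g u : 0 <= p g u.
Proof. by rewrite /p divr_ge0 ?w_ge0 ?deg_ge0. Qed.
Lemma sum_p g : \sum_(u <- nb g) p g u <= 1.
Proof.
rewrite /p -mulr_suml -/(deg w nb g).
have [->|nz] := eqVneq (deg w nb g) 0; first by rewrite mul0r.
by rewrite mulfV.
Qed.

Lemma sum_ge_term (s : seq V) (F : V -> R) c : c \in s ->
  (forall u, 0 <= F u) -> F c <= \sum_(u <- s) F u.
Proof.
move=> cs F0; rewrite (big_rem c cs) /= lerDl sumr_ge0 //.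
Qed.

Lemma hitp_ge0 A B n g : 0 <= hitp w nb A B n g.
Proof.
elim: n g => [|n IH] g /=; first by case: ifP => //; case: ifP.
case: ifP => // _; case: ifP => // _.
by rewrite sumr_ge0 // => u _; rewrite mulr_ge0 ?p_ge0 ?IH.
Qed.

Lemma hitp_le1 A B n g : hitp w nb A B n g <= 1.
Proof.
elim: n g => [|n IH] g /=; first by case: ifP => //; case: ifP.
case: ifP => // _; case: ifP => // _.
apply: le_trans (sum_p g); apply: ler_sum => u _.
by rewrite -[X in _ <= X]mulr1 ler_wpM2l ?p_ge0 ?IH.
Qed.

Lemma hitp_S A B n g : hitp w nb A B n g <= hitp w nb A B n.+1 g.
Proof.
elim: n g => [|n IH] g.
  rewrite /=; case: ifP => // _; case: ifP => _; first by [].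
  idtac.
  by rewrite sumr_ge0 // => u _; apply: mulr_ge0; [apply: p_ge0 | exact: (hitp_ge0 A B 0 u)].
rewrite /=.
case: ifP => // _; case: ifP => // _.
by apply: ler_sum => u _; apply: ler_wpM2l; [apply: p_ge0 | apply: IH].
Qed.

Lemma hitp_mono A B m n g : (m <= n)%N -> hitp w nb A B m g <= hitp w nb A B n g.
Proof.
move/subnK <-; elim: (n - m)%N => [|k IH] //.
by apply: le_trans IH _; rewrite addSn hitp_S.
Qed.

Lemma hitp_walk (A : pred V) n g z : walk nb n g z -> z \in A ->
  0 < hitp w nb A pred0 n g.
Proof.
elim: n g => [|n IH] g /=; first by move=> -> zA; rewrite zA.
move=> [c cn wk] zA; case: ifP => // _.
have wp : 0 < w g c by case: hg => _ _ h _ _; rewrite -h.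
have dp : 0 < deg w nb g.
  by apply: lt_le_trans wp _; rewrite /deg; apply: (@sum_ge_term _ (fun u => w g u)) => // u; apply: w_ge0.
rewrite (big_rem c cn) /=; apply: ltr_pwDl.
  by rewrite mulr_gt0 ?IH // divr_gt0.
by rewrite sumr_ge0 // => u _; apply: mulr_ge0; [apply: p_ge0 | apply: hitp_ge0].
Qed.


Variables (x y : V).
Hypothesis hxy : x != y.

Definition Kop (phi : V -> R) g :=
  if (g == x) || (g == y) then 0 else \sum_(u <- nb g) p g u * phi u.
Definition Kn n phi := iter n Kop phi.
Definition H n g := hitp w nb (pred1 x) (pred1 y) n g.
Definition Kk n g := hitp w nb (pred2 x y) pred0 n g.
Definition ix g : R := (g == x)%:R.
Definition iy g : R := (g == y)%:R.

Lemma H0 g : H 0 g = ix g.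
Proof.
rewrite /H /ix /= !inE.
case: (eqVneq g x) => [->|nx]; first by rewrite (negbTE hxy).
by case: (eqVneq g y).
Qed.
Lemma HS n g : H n.+1 g = ix g + Kop (H n) g.
Proof.
rewrite /H /ix /Kop /= !inE.
case: (eqVneq g x) => [->|nx]; first by rewrite (negbTE hxy) ?eqxx /= addr0.
by case: (eqVneq g y) => [_|ny] /=; rewrite ?add0r ?addr0.
Qed.
Lemma Kk0 g : Kk 0 g = ix g + iy g.
Proof.
rewrite /Kk /ix /iy /= !inE.
case: (eqVneq g x) => [->|nx]; first by rewrite (negbTE hxy) ?eqxx addr0.
by case: (eqVneq g y) => [_|ny] /=; rewrite ?add0r ?addr0.
Qed.
Lemma KkS n g : Kk n.+1 g = ix g + iy g + Kop (Kk n) g.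
Proof.
rewrite /Kk /ix /iy /Kop /= !inE.
case: (eqVneq g x) => [->|nx]; first by rewrite (negbTE hxy) ?eqxx /= !addr0.
by case: (eqVneq g y) => [_|ny] /=; rewrite ?add0r ?addr0.
Qed.

Lemma Kop_lin (a b : R) (phi psi chi th : V -> R) g :
  Kop (fun u => a * phi u + b * (psi u - chi u) + th u) g =
  a * Kop phi g + b * (Kop psi g - Kop chi g) + Kop th g.
Proof.
rewrite /Kop; case: ifP => _; first by rewrite !mulr0 subrr mulr0 !addr0.
rewrite -sumrB !mulr_sumr -!big_split /=; apply: eq_bigr => u _; ring.
Qed.

Lemma Kop_sub (phi psi : V -> R) g :
  Kop (fun u => phi u - psi u) g = Kop phi g - Kop psi g.
Proof.
rewrite /Kop; case: ifP => _; first by rewrite subrr.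
rewrite -sumrB; apply: eq_bigr => u _; ring.
Qed.

Lemma Kop_scale (c : R) (phi : V -> R) g :
  Kop (fun u => c * phi u) g = c * Kop phi g.
Proof.
rewrite /Kop; case: ifP => _; first by rewrite mulr0.
rewrite mulr_sumr; apply: eq_bigr => u _; ring.
Qed.

Lemma Kop_ext (phi psi : V -> R) g : (forall u, phi u = psi u) -> Kop phi g = Kop psi g.
Proof. by move=> h; rewrite /Kop; case: ifP => // _; apply: eq_bigr => u _; rewrite h. Qed.

Lemma Kop_abs (phi psi : V -> R) g : (forall u, `|phi u| <= psi u) -> `|Kop phi g| <= Kop psi g.
Proof.
move=> h; rewrite /Kop; case: ifP => _; first by rewrite normr0.
apply: le_trans (ler_norm_sum _ _ _) _; apply: ler_sum => u _.
by rewrite normrM ger0_norm ?p_ge0 // ler_wpM2l ?p_ge0.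
Qed.

Lemma Kn_abs (phi psi : V -> R) n g : (forall u, `|phi u| <= psi u) -> `|Kn n phi g| <= Kn n psi g.
Proof.
move=> h; elim: n g => [|n IH] g /=; first exact: h.
exact: Kop_abs.
Qed.

Lemma Kn_scale (c : R) (phi : V -> R) n g : Kn n (fun u => c * phi u) g = c * Kn n phi g.
Proof.
elim: n g => [|n IH] g //=.
rewrite -Kop_scale; apply: Kop_ext => u; exact: IH.
Qed.

Lemma Kn_Kk M m g : Kn m.+1 (Kk M) g = Kk (m.+1 + M) g - Kk m g.
Proof.
elim: m g => [|m IH] g.
  by rewrite /= KkS Kk0; ring.
rewrite [Kn _ _ _]/= (@Kop_ext _ (fun u => Kk (m.+1 + M) u - Kk m u) g IH) Kop_sub addSn !KkS /=; ring.
Qed.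

Variables (f : V -> R).
Hypothesis hf : forall z, z != x -> z != y -> harmonic_at w nb f z.

Lemma base_id g : f g = f x * ix g + f y * iy g + Kop f g.
Proof.
rewrite /ix /iy /Kop.
case: (eqVneq g x) => [->|nx]; first by rewrite (negbTE hxy) /=; ring.
case: (eqVneq g y) => [->|ny] /=; first by ring.
rewrite !mulr0 !add0r (hf _ nx ny) /harmonic_at mulr_sumr.
by apply: eq_bigr => u _; rewrite /p; ring.
Qed.

Lemma main_id n g : f g = f x * H n g + f y * (Kk n g - H n g) + Kn n.+1 f g.
Proof.
elim: n g => [|n IH] g.
  by rewrite H0 Kk0 {1}base_id /=; ring.
rewrite {1}base_id (@Kop_ext _ (fun u => f x * H n u + f y * (Kk n u - H n u) + Kn n.+1 f u) g IH) Kop_lin HS KkS.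
rewrite [Kn n.+2 f g]/=; ring.
Qed.

Definition hh g := hit_prob w nb (pred1 x) (pred1 y) g.
Definition kk g := hit_prob w nb (pred2 x y) pred0 g.

Lemma dist_le (u v eps : R) : v - eps < u -> u <= v -> `|u - v| <= eps.
Proof. move=> h1 h2; rewrite ler_norml; apply/andP; split; lra. Qed.

Lemma D0 M c : 0 <= c -> (forall u, `|f u| <= c * Kk M u) ->
  forall g, f g = f x * hh g + f y * (kk g - hh g).
Proof.
move=> c0 hb g.
have hH := @sup_props R (fun n => H n g)
  (fun n => (introT andP (conj (hitp_ge0 _ _ _ _) (hitp_le1 _ _ _ _)))).
have hK := @sup_props R (fun n => Kk n g)
  (fun n => (introT andP (conj (hitp_ge0 _ _ _ _) (hitp_le1 _ _ _ _)))).
case: hH => [Hub Hadh]; case: hK => [Kub Kadh].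
have {Hub}Hub : forall n, H n g <= hh g := Hub.
have {Kub}Kub : forall n, Kk n g <= kk g := Kub.
have {Hadh}Hadh : forall eps, 0 < eps -> exists n, hh g - eps < H n g := Hadh.
have {Kadh}Kadh : forall eps, 0 < eps -> exists n, kk g - eps < Kk n g := Kadh.
set D := f g - (f x * hh g + f y * (kk g - hh g)).
set K := `|f x| + `|f y| + `|f y| + c + 1.
have K0 : 0 < K by rewrite /K; have := normr_ge0 (f x); have := normr_ge0 (f y); lra.
have bnd : forall eps, 0 < eps -> `|D| <= K * eps.
  move=> eps e0.
  case: (Hadh _ e0) => n1 h1; case: (Kadh _ e0) => n2 h2.
  set n := maxn n1 n2.
  have e1 : hh g - eps < H n g.
    by apply: lt_le_trans h1 _; apply: hitp_mono; rewrite leq_maxl.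
  have e2 : kk g - eps < Kk n g.
    by apply: lt_le_trans h2 _; apply: hitp_mono; rewrite leq_maxr.
  have d1 := dist_le _ _ _ e1 (Hub n).
  have d2 := dist_le _ _ _ e2 (Kub n).
  have d3 : `|Kn n.+1 f g| <= c * eps.
    apply: le_trans (@Kn_abs f (fun u => c * Kk M u) n.+1 g hb) _.
    rewrite Kn_scale Kn_Kk ler_wpM2l //.
    have := Kub (n.+1 + M)%N; have := Kub n; lra.
  have -> : D = f x * (H n g - hh g) + f y * ((Kk n g - kk g) - (H n g - hh g)) + Kn n.+1 f g.
    by rewrite /D (main_id n g); ring.
  have t1 : `|f x * (H n g - hh g)| <= `|f x| * eps by rewrite normrM ler_wpM2l.
  have t2 : `|f y * ((Kk n g - kk g) - (H n g - hh g))| <= `|f y| * eps + `|f y| * eps.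
    by rewrite normrM -mulrDr ler_wpM2l // (le_trans (ler_normB _ _)) // lerD.
  have := ler_normD (f x * (H n g - hh g)) (f y * ((Kk n g - kk g) - (H n g - hh g))).
  have := ler_normD (f x * (H n g - hh g) + f y * ((Kk n g - kk g) - (H n g - hh g))) (Kn n.+1 f g).
  rewrite /K !mulrDl mul1r; lra.
apply/eqP; rewrite -subr_eq0 -/D -normr_eq0; apply/eqP.
apply: le_anti; rewrite normr_ge0 andbT.
apply/negPn/negP; rewrite -ltNge => Dp.
have e0 : 0 < `|D| / (2 * K) by rewrite divr_gt0 // mulr_gt0.
have := bnd _ e0.
have eq : K * (`|D| / (2 * K)) = `|D| / 2.
  by field; rewrite gt_eqF.
rewrite eq; lra.
Qed.

Hypothesis hcon : connected_graph nb.

Lemma Kk_pos_walk g : exists n, 0 < Kk n g.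
Proof.
case: (hcon g x) => n wk; exists n.
by apply: (@hitp_walk (pred2 x y) n g x wk); rewrite !inE eqxx.
Qed.

Lemma kk_pos g : 0 < kk g.
Proof.
case: (Kk_pos_walk g) => n hn.
have [ub _] := @sup_props R (fun n => Kk n g)
  (fun n => (introT andP (conj (hitp_ge0 _ _ _ _) (hitp_le1 _ _ _ _)))).
exact: lt_le_trans hn (ub n).
Qed.

Lemma bound_seq (s : seq V) : exists M (c : R), 0 <= c /\ forall v, v \in s -> `|f v| <= c * Kk M v.
Proof.
elim: s => [|v s [M1 [c1 [c10 IH]]]]; first by exists 0%N, 0; split.
case: (Kk_pos_walk v) => nv hv.
set M := maxn M1 nv.
have hvM : 0 < Kk M v by apply: lt_le_trans hv _; apply: hitp_mono; rewrite leq_maxr.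
exists M, (c1 + `|f v| / Kk M v); split.
  by rewrite addr_ge0 // divr_ge0 // ltW.
move=> u; rewrite inE => /orP [/eqP ->|us].
  rewrite mulrDl mulfVK ?gt_eqF // lerDr mulr_ge0 //; exact: hitp_ge0.
apply: (le_trans (IH u us)); rewrite mulrDl.
have h1 : c1 * Kk M1 u <= c1 * Kk M u by rewrite ler_wpM2l // hitp_mono // leq_maxl.
have h2 : 0 <= `|f v| / Kk M v * Kk M u.
  by apply: mulr_ge0; [apply: divr_ge0; [exact: normr_ge0 | exact: ltW] | exact: hitp_ge0].
lra.
Qed.

End G.

Lemma sup_zero (R : realType) (u : nat -> R) : (forall n, u n = 0) -> sup (range u) = 0.
Proof.
move=> hu.
have hb : forall n, 0 <= u n <= 1 by move=> n; rewrite hu lexx ler01.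
have [ub adh] := @sup_props R u hb.
apply: le_anti; rewrite (le_trans _ (ub 0%N)) ?hu // andbT.
apply/negPn/negP; rewrite -ltNge => sp.
have [n hn] := adh _ sp; move: hn; rewrite hu subrr ltxx //.
Qed.

Lemma hitp_same (R : realType) (V : eqType) w nb (A : pred V) n g :
  hitp (R:=R) w nb A A n g = 0.
Proof.
elim: n g => [|n IH] g /=; case: ifP => //; move=> h; rewrite h //.
by rewrite big1 // => u _; rewrite IH mulr0.
Qed.


Theorem lemma6p4 (R : realType) (V : eqType) (w : V -> V -> R) (nb : V -> seq V)
    (e x y : V) (f : V -> R) :
  is_lf_wgraph w nb ->
  connected_graph nb ->
  vertex_transitive w ->
  (exists s : seq V, forall v, v \notin s -> f v = 0) ->
  (exists v, f v != 0) ->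
  (forall z, z != x -> z != y -> harmonic_at w nb f z) ->
  exists N : nat, (0 < N)%N /\
    forall g g', dist_ge nb N e g -> dist_ge nb N e g' ->
      cond_hit w nb x y g = cond_hit w nb x y g'.
Proof.
move=> hg hcon _ [s hs] [v0 hv0] hf.
have [N [N0 hN]] : exists N, (0 < N)%N /\
    forall v, v \in s -> exists2 n, (n < N)%N & walk nb n e v.
  elim: s {hs} => [|v s [N [N0 IH]]]; first by exists 1%N.
  case: (hcon e v) => n wk; exists (maxn N n.+1); split; first by rewrite leq_max N0.
  move=> u; rewrite inE => /orP [/eqP -> | us].
    by exists n => //; rewrite leq_max ltnSn orbT.
  by case: (IH u us) => m hm wm; exists m => //; rewrite leq_max hm.
exists N; split => // g g' dg dg'.
have far : forall u, dist_ge nb N e u -> f u = 0.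
  move=> u du; apply: hs; apply/negP => us.
  by case: (hN u us) => m hm wm; exact: (du m hm wm).
case: (eqVneq x y) => [<-|hxy].
  have z : forall u, hit_prob w nb (pred1 x) (pred1 x) u = 0.
    by move=> u; apply: sup_zero => n; apply: hitp_same.
  by rewrite /cond_hit !z !mul0r.
have [M [c [c0 hb]]] := bound_seq _ _ _ _ hg x y f hcon s.
have hb' : forall u, `|f u| <= c * Kk R V w nb x y M u.
  move=> u; case us: (u \in s); first exact: hb.
  rewrite hs ?us // normr0 mulr_ge0 //; exact: (hitp_ge0 _ _ _ _ hg).
have D := D0 _ _ _ _ hg x y hxy f hf M c c0 hb'.
have kp := kk_pos _ _ _ _ hg x y hcon.
have ab : f x != f y.
  apply/negP => /eqP ab.
  have := D g; rewrite far // -ab => h.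
  have fx0 : f x = 0.
    have : f x * kk R V w nb x y g = 0 by rewrite h; ring.
    by move/eqP; rewrite mulf_eq0 (gt_eqF (kp g)) orbF => /eqP.
  by move: hv0; rewrite D -ab fx0 !mul0r addr0 eqxx.
have key : forall u, dist_ge nb N e u -> cond_hit w nb x y u = - f y / (f x - f y).
  move=> u du; have := D u; rewrite far // => h.
  change (hh R V w nb x y u / kk R V w nb x y u = - f y / (f x - f y)).
  have := kp u; have : f x - f y != 0 by rewrite subr_eq0.
  set H := hh R V w nb x y u; set K := kk R V w nb x y u => nz Kp.
  have Kn0 : K != 0 by rewrite gt_eqF.
  apply/eqP; rewrite eqr_div //; apply/eqP.
  have -> : H * (f x - f y) = f x * H + f y * (K - H) - f y * K by ring.
  by rewrite -h; ring.
by rewrite !key.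
Qed.
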